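(* Let $p_1, \dots, p_N \in \mathbb{R}$. For each $j$, let $C^j$ be the elementary symmetric filter with $c^j(-1) = c^j(1) = 1$, $c^j(0) = p_j$, and $c^j(t) = 0$ for $|t| > 1$. Let $C_N = C^1 * C^2 * \cdots * C^N$. Then $C_N$ is invertible if and only if each $C^j$, $j = 1, \dots, N$, is invertible.
   Context: Sequences are indexed by $\mathbb{Z}$. The convolution of sequences $A, B$ is $(A * B)(t) = \sum_{k} a(k) b(t-k)$. The unit sequence $I$ is defined by $I(0) = 1$ and $I(t) = 0$ for $t \neq 0$. A finite filter $C$ is called invertible if there exists a sequence $Z = (z(t))_{t\in\mathbb{Z}}$ with $C * Z = I$ such that $Z$ is summable, i.e. $\sum_t |z(t)| < \infty$, and its entries converge to $0$ exponentially fast, i.e. $|z(t)| \le K r^{|t|}$ for some constants $K > 0$ and $0 < r < 1$. *)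

(* Defs.v *)
From mathcomp Require Import all_boot all_order all_algebra.
From mathcomp Require Import reals.
Set Implicit Arguments. Unset Strict Implicit. Unset Printing Implicit Defensive.
Import Order.TTheory GRing.Theory Num.Theory.
Local Open Scope ring_scope.

Section Filters.
Variable R : realType.

Definition supported_in (M : nat) (a : int -> R) : Prop :=
  forall t : int, (M < absz t)%N -> a t = 0.

(* convolution (a * b)(t) = sum_k a(k) b(t-k), for a supported in [-M, M]
   (the sum over k in Z then reduces to k in [-M, M]). *)
Definition fconv (M : nat) (a b : int -> R) : int -> R :=
  fun t => \sum_(k < (M + M).+1) a (k%:Z - M%:Z) * b (t - (k%:Z - M%:Z)).

Definition unitseq : int -> R := fun t => if t == 0 then 1 else 0.

Definition summable (z : int -> R) : Prop :=
  exists B : R, forall n : nat,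
    \sum_(k < (n + n).+1) `|z (k%:Z - n%:Z)| <= B.

Definition exp_decay (z : int -> R) : Prop :=
  exists K : R, exists r : R, 0 < K /\ 0 < r /\ r < 1 /\
    forall t : int, `|z t| <= K * r ^+ absz t.

Definition invertible (c : int -> R) : Prop :=
  exists M : nat, supported_in M c /\
    exists z : int -> R,
      (forall t, fconv M c z t = unitseq t) /\ summable z /\ exp_decay z.

Definition elemfilt (p : R) : int -> R :=
  fun t => if t == 0 then p else if absz t == 1%N then 1 else 0.

Definition filtprod (ps : seq R) : int -> R :=
  foldr (fun p acc => fconv 1 (elemfilt p) acc) unitseq ps.

End Filters.

(* Main.v *)
Require Import Defs.
From mathcomp Require Import all_boot all_order all_algebra.
From mathcomp Require Import all_classical all_reals all_analysis.
From mathcomp Require Import zify ring lra.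
Import Order.TTheory GRing.Theory Num.Theory.
Import numFieldNormedType.Exports.
Local Open Scope classical_set_scope.
Local Open Scope ring_scope.

Definition csum {R : realType} (N : nat) (f : int -> R) : R :=
  \sum_(i < (N + N).+1) f (i%:Z - N%:Z).

Lemma csum_shift1 (R : realType) (N : nat) (f : int -> R) :
  f (- N%:Z) = f (N%:Z + 1) -> csum N (fun k => f (k + 1)) = csum N f.
Proof.
move=> H; rewrite /csum [LHS]big_ord_recr [RHS]big_ord_recl /=.
have -> : ((N + N)%N%:Z - N%:Z + 1) = N%:Z + 1 :> int by lia.
rewrite -H sub0r addrC; congr (_ + _).
  apply: eq_bigr => i _; congr f; rewrite /bump /=. lia.
Qed.

Lemma csumS (R : realType) (N : nat) (f : int -> R) :
  csum N.+1 f = f (- N.+1%:Z) + csum N f + f (N.+1%:Z).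
Proof.
rewrite /csum.
have -> : (N.+1 + N.+1).+1 = ((N + N).+1).+2 by lia.
rewrite big_ord_recl big_ord_recr /= sub0r addrA; congr (_ + _ + _).
- apply: eq_bigr => i _; congr f; rewrite /bump /=; lia.
- congr f; rewrite /bump /=; lia.
Qed.

Lemma csum_win (R : realType) (M d : nat) (f : int -> R) :
  supported_in M f -> csum (M + d) f = csum M f.
Proof.
move=> Hf; elim: d => [|d IH]; first by rewrite addn0.
rewrite addnS csumS IH !Hf ?addr0 ?add0r //=; lia.
Qed.

Lemma csum_win' (R : realType) (M N : nat) (f : int -> R) :
  supported_in M f -> (M <= N)%N -> csum N f = csum M f.
Proof. by move=> Hf /subnKC <-; rewrite csum_win. Qed.

Lemma csum_shiftP (R : realType) (M N : nat) (f : int -> R) :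
  supported_in M f -> (M < N)%N -> csum N (fun k => f (k + 1)) = csum N f.
Proof.
move=> Hf HN; apply: csum_shift1; rewrite !Hf //; lia.
Qed.

Lemma csum_shiftN (R : realType) (M N : nat) (f : int -> R) :
  supported_in M f -> (M < N)%N -> csum N (fun k => f (k - 1)) = csum N f.
Proof.
move=> Hf HN.
have Hg : supported_in M.+1 (fun k => f (k - 1)).
  by move=> k Hk; apply: Hf; lia.
have -> : csum N f = csum N (fun k => (fun k => f (k - 1)) (k + 1)).
  by apply: eq_bigr => i _; rewrite addrK.
rewrite (@csum_shift1 _ N (fun k => f (k - 1))) // !Hf //; lia.
Qed.

Definition Lop {R : realType} (p : R) (y : int -> R) : int -> R :=
  fun t => y (t + 1) + p * y t + y (t - 1).

Lemma fconvE (R : realType) (M : nat) (a b : int -> R) t :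
  fconv M a b t = csum M (fun k => a k * b (t - k)).
Proof. by []. Qed.

Lemma fconv_elem (R : realType) (p : R) (y : int -> R) t :
  fconv 1 (elemfilt p) y t = Lop p y t.
Proof.
rewrite fconvE /csum !big_ord_recr big_ord0 /= /elemfilt /Lop /=.
rewrite add0r !mul1r.
have -> : t - (0%Z - 1%Z) = t + 1 by lia.
have -> : t - (1%Z - 1%Z) = t by lia.
have -> : t - ((1 + 1)%N%:Z - 1%Z) = t - 1 by lia.
by [].
Qed.

Lemma supp_mulr (R : realType) n (F h : int -> R) :
  supported_in n F -> supported_in n (fun k => F k * h k).
Proof. by move=> HF k Hk; rewrite HF ?mul0r. Qed.

Lemma fconv_Lop (R : realType) n (q : R) (F x : int -> R) t :
  supported_in n F -> fconv n.+1 (Lop q F) x t = Lop q (fconv n F x) t.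
Proof.
move=> HF; rewrite !fconvE /Lop.
set g1 := fun k => F k * x (t + 1 - k).
set g2 := fun k => F k * x (t - 1 - k).
set g0 := fun k => F k * x (t - k).
have -> : csum n.+1 (fun k => (F (k + 1) + q * F k + F (k - 1)) * x (t - k)) =
  csum n.+1 (fun k => g1 (k + 1)) + q * csum n.+1 g0 + csum n.+1 (fun k => g2 (k - 1)).
  rewrite /csum mulr_sumr -!big_split; apply: eq_bigr => i _.
  rewrite /g1 /g2 /g0.
  have -> : t + 1 - (i%:Z - n.+1%:Z + 1) = t - (i%:Z - n.+1%:Z) by lia.
  have -> : t - 1 - (i%:Z - n.+1%:Z - 1) = t - (i%:Z - n.+1%:Z) by lia.
  by rewrite !mulrDl -mulrA.
rewrite (@csum_shiftP _ n) ?(@csum_shiftN _ n) ?supp_mulr //.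
rewrite !(@csum_win' _ n) ?supp_mulr //.
all: exact: supp_mulr.
Qed.

Definition Lstack {R : realType} (ps : seq R) (x : int -> R) : int -> R :=
  foldr (fun p acc => Lop p acc) x ps.

Lemma filtprodE (R : realType) (ps : seq R) : filtprod ps = Lstack ps (@unitseq R).
Proof.
elim: ps => [//|p ps IH] /=.
rewrite -IH; apply: boolp.funext => t; exact: fconv_elem.
Qed.

Lemma supp_Lop (R : realType) n (q : R) (F : int -> R) :
  supported_in n F -> supported_in n.+1 (Lop q F).
Proof.
move=> HF t Ht; rewrite /Lop !HF ?mulr0 ?addr0 //; lia.
Qed.

Lemma supp_filtprod (R : realType) (ps : seq R) : supported_in (size ps) (filtprod ps).
Proof.
rewrite filtprodE; elim: ps => [|p ps IH] /=.
  by move=> t Ht; rewrite /unitseq; case: eqP => // E; rewrite E in Ht.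
exact: supp_Lop.
Qed.

Lemma fconv_filtprod (R : realType) (ps : seq R) x t :
  fconv (size ps) (filtprod ps) x t = Lstack ps x t.
Proof.
elim: ps t => [|p ps IH] t.
  rewrite /= fconvE /csum big_ord_recr big_ord0 /= add0r /unitseq /= mul1r.
  by rewrite subr0.
have -> : filtprod (p :: ps) = Lop p (filtprod ps) by rewrite !filtprodE.
rewrite [size _]/= fconv_Lop; last exact: supp_filtprod.
by rewrite /Lop !IH.
Qed.

Lemma small_pow (R : realType) (r e : R) : 0 <= r -> r < 1 -> 0 < e -> exists N, r ^+ N < e.
Proof.
move=> r0 r1 e0.
have H : (fun n => r ^+ n) @ \oo --> (0:R) by apply: cvg_expr; rewrite ger0_norm.
move/cvgrPdist_lt : H => /(_ e e0) [N _ HN].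
exists N; have := HN N (leqnn N); rewrite sub0r normrN ger0_norm //.
exact: exprn_ge0.
Qed.

Fixpoint vp {R : realType} (p : R) (n : nat) : R * R :=
  match n with
  | 0 => (1, - (p / 2))
  | n.+1 => ((vp p n).2, - p * (vp p n).2 - (vp p n).1)
  end.

Definition vv {R : realType} (p : R) n := (vp p n).1.

Lemma vvSS (R : realType) (p : R) n : vv p n.+2 = - p * vv p n.+1 - vv p n.
Proof. by []. Qed.

Lemma vv_inv (R : realType) (p : R) n :
  vv p n.+1 ^+ 2 + p * vv p n.+1 * vv p n + vv p n ^+ 2 = 1 - p ^+ 2 / 4.
Proof.
elim: n => [|n IH].
  by rewrite /vv /=; field.
rewrite vvSS -IH. ring.
Qed.

Lemma vv_bound (R : realType) (p : R) n : `|p| <= 2 -> vv p n ^+ 2 <= 1.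
Proof.
move=> hp.
have hp2 : p ^+ 2 <= 4.
  have : `|p| ^+ 2 <= 2 ^+ 2 by rewrite ler_pXn2r ?nnegrE.
  by rewrite real_normK ?num_real //; lra.
have [hlt|heq] : p ^+ 2 < 4 \/ p ^+ 2 = 4 by lra.
  have I := @vv_inv R p n.
  have J : vv p n.+1 ^+ 2 + p * vv p n.+1 * vv p n + vv p n ^+ 2 =
       (vv p n.+1 + p / 2 * vv p n) ^+ 2 + (1 - p ^+ 2 / 4) * vv p n ^+ 2
    by field; rewrite //.
  have : (1 - p ^+ 2 / 4) * vv p n ^+ 2 <= (1 - p ^+ 2 / 4) * 1.
    rewrite mulr1 -[X in _ <= X]I J.
    by rewrite lerDr sqr_ge0.
  by rewrite ler_pM2l //; lra.
suff : vv p n ^+ 2 = 1 by move=> ->.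
elim: n => [|n IH]; first by rewrite /vv /= expr1n.
have I := @vv_inv R p n.
have E : (vv p n.+1 + p / 2 * vv p n) ^+ 2 = 0.
  have J : vv p n.+1 ^+ 2 + p * vv p n.+1 * vv p n + vv p n ^+ 2 =
       (vv p n.+1 + p / 2 * vv p n) ^+ 2 + (1 - p ^+ 2 / 4) * vv p n ^+ 2
    by field; rewrite //.
  move: J; rewrite I heq.
  have -> : (1 - 4 / 4 : R) = 0 by field; rewrite //.
  by rewrite mul0r addr0 => <-.
move/eqP: E; rewrite sqrf_eq0 addr_eq0 => /eqP ->.
rewrite exprNn sqrrN exprMn IH mulr1 expr_div_n heq; by field.
Qed.

Definition uu {R : realType} (p : R) (t : int) : R := vv p (absz t).

Lemma uu_ann (R : realType) (p : R) t : Lop p (uu p) t = 0.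
Proof.
rewrite /Lop /uu.
case: t => [[|n]|n].
- have -> : absz (Posz 0 + 1) = 1%N by [].
  have -> : absz (Posz 0 - 1) = 1%N by [].
  by rewrite /vv /=; field.
- have -> : absz (Posz n.+1 + 1) = n.+2 by lia.
  have -> : absz (Posz n.+1 - 1) = n by lia.
  by rewrite vvSS /=; ring.
- have -> : absz (Negz n + 1) = n by lia.
  have -> : absz (Negz n - 1) = n.+2 by lia.
  have -> : absz (Negz n) = n.+1 by lia.
  by rewrite vvSS; ring.
Qed.

Lemma uu_bound (R : realType) (p : R) t : `|p| <= 2 -> `|uu p t| <= 1.
Proof.
move=> hp; have := @vv_bound R p (absz t) hp; rewrite /uu => h.
rewrite ler_norml; apply/andP; split; nra.
Qed.

Lemma uu0 (R : realType) (p : R) : uu p 0 = 1.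
Proof. by []. Qed.

Lemma pow_abs_le (R : realType) (r : R) (s t : int) (m : nat) :
  0 <= r -> r <= 1 -> (absz t <= absz s + m)%N -> r ^+ absz s * r ^+ m <= r ^+ absz t.
Proof. by move=> r0 r1 h; rewrite -exprD; apply: ler_wiXn2l. Qed.

Lemma K1 (R : realType) (p : R) (y : int -> R) :
  exp_decay y -> (forall t, Lop p y t = unitseq R t) -> `|p| <= 2 -> False.
Proof.
move=> [K [r [K0 [r0 [r1 Hy]]]]] Hl hp.
set u := uu p.
set W := fun t : int => y (t + 1) * u t - y t * u (t + 1).
have HW : forall t, W t - W (t - 1) = u t * unitseq R t.
  move=> t; have := Hl t; have := @uu_ann R p t; rewrite /Lop /W -/u => h1 h2.
  rewrite subrK.

  have -> : y (t + 1) = unitseq R t - p * y t - y (t - 1) by rewrite -h2; ring.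
  have -> : u (t + 1) = - p * u t - u (t - 1).
    have -> : u (t + 1) = (u (t + 1) + p * u t + u (t - 1)) - p * u t - u (t - 1) by ring.
    by rewrite h1; ring.
  ring.
have Hpos : forall N : nat, W N%:Z = W 0.
  elim=> [//|N IH]; rewrite -IH.
  have := HW N.+1%:Z; rewrite /unitseq /= mulr0.
  have -> : (N.+1%:Z - 1 = N%:Z) by lia.
  by move/eqP; rewrite subr_eq0 => /eqP.
have Hneg : forall N : nat, W (- N.+1%:Z) = W (-1).
  elim=> [//|N IH]; rewrite -IH.
  have := HW (- N.+1%:Z); rewrite /unitseq /= mulr0.
  have -> : (- N.+1%:Z - 1 = - N.+2%:Z) by lia.
  by move/eqP; rewrite subr_eq0 => /eqP.
have Hu : forall t, `|u t| <= 1 by move=> t; exact: uu_bound.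
have Hb : forall (s t : int) (N : nat), (N <= absz s)%N -> `|y s * u t| <= K * r ^+ N.
  move=> s t N h1.
  rewrite normrM; apply: le_trans (_ : `|y s| * 1 <= _).
    by rewrite ler_wpM2l // Hu.
  rewrite mulr1; apply: le_trans (Hy s) _; apply: ler_wpM2l; first exact: ltW.
  by apply: ler_wiXn2l => //; exact: ltW.
have H01 := HW 0; rewrite /unitseq /= mulr1 /u uu0 in H01.
have e0 : 0 < 1 / (4 * K) by rewrite divr_gt0 // mulr_gt0.
have [N HN] := @small_pow R r (1 / (4 * K)) (ltW r0) r1 e0.
have B1 : `|W N%:Z| <= 2 * K * r ^+ N.
  rewrite /W; apply: le_trans (ler_normB _ _) _.
  have := Hb (N%:Z + 1) N%:Z N ltac:(lia).
  have := Hb N%:Z (N%:Z + 1) N ltac:(lia).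
  lra.
have B2 : `|W (- N.+1%:Z)| <= 2 * K * r ^+ N.
  rewrite /W; apply: le_trans (ler_normB _ _) _.
  have := Hb (- N.+1%:Z + 1) (- N.+1%:Z) N ltac:(lia).
  have := Hb (- N.+1%:Z) (- N.+1%:Z + 1) N ltac:(lia).
  lra.
rewrite -(Hpos N) -(Hneg N) in H01.
have : 1 <= 4 * K * r ^+ N.
  have h1 : 1 <= `|W N%:Z - W (- N.+1%:Z)| by rewrite H01 normr1.
  have := ler_normB (W N%:Z) (W (- N.+1%:Z)); lra.
have : 4 * K * r ^+ N < 1.
  move: HN; rewrite ltr_pdivlMr ?mulr_gt0 //; lra.
lra.
Qed.

Lemma Lop_decay (R : realType) (p : R) y : exp_decay y -> exp_decay (Lop p y).
Proof.
move=> [K [r [K0 [r0 [r1 Hy]]]]].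
exists (K / r + `|p| * K + K / r), r; split.
  have : 0 < K / r by rewrite divr_gt0.
  have : 0 <= `|p| * K by rewrite mulr_ge0 // ltW.
  lra.
do 2 split => //.
move=> t; rewrite /Lop.
have A : forall s, (absz t <= absz s + 1)%N -> `|y s| <= K / r * r ^+ absz t.
  move=> s hs; apply: le_trans (Hy s) _.
  rewrite -mulrA; apply: ler_wpM2l; first exact: ltW.
  rewrite ler_pdivlMl //.
  rewrite -exprS.
  apply: ler_wiXn2l; [exact: ltW | exact: ltW | lia].
have := A (t + 1) ltac:(lia); have := A (t - 1) ltac:(lia).
have := Hy t.
have := ler_normD (y (t + 1) + p * y t) (y (t - 1)).
have := ler_normD (y (t + 1)) (p * y t).
rewrite normrM.
have : `|p| * `|y t| <= `|p| * (K * r ^+ `|t|) by rewrite ler_wpM2l // Hy.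
have : 0 <= r ^+ `|t| by rewrite exprn_ge0 // ltW.
nra.
Qed.

Lemma Lstack_decay (R : realType) (ps : seq R) y : exp_decay y -> exp_decay (Lstack ps y).
Proof. by move=> h; elim: ps => [//|p ps IH] /=; exact: Lop_decay. Qed.

Lemma Lop_comm (R : realType) (p q : R) y : Lop p (Lop q y) = Lop q (Lop p y).
Proof.
apply: boolp.funext => t; rewrite /Lop.
rewrite ?addrK ?subrK; ring.
Qed.

Lemma Lstack_Lop (R : realType) (ps : seq R) q y :
  Lstack ps (Lop q y) = Lop q (Lstack ps y).
Proof. by elim: ps => [//|p ps IH] /=; rewrite IH Lop_comm. Qed.

Lemma Lstack_extract (R : realType) (ps : seq R) z j : (j < size ps)%N -> exp_decay z ->
  exists y, exp_decay y /\ Lstack ps z = Lop (nth 0 ps j) y.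
Proof.
elim: ps j => [//|q ps IH] [|j] /= hj hz.
  by exists (Lstack ps z); split => //; exact: Lstack_decay.
have [y [hy E]] := IH j hj hz.
exists (Lop q y); split; first exact: Lop_decay.
by rewrite E Lop_comm.
Qed.

Lemma fconv_win (R : realType) M N (c x : int -> R) t :
  supported_in M c -> supported_in N c -> fconv M c x t = fconv N c x t.
Proof.
move=> hM hN; rewrite !fconvE.
rewrite -(@csum_win' R M (maxn M N)) ?leq_maxl //; last exact: supp_mulr.
rewrite -(@csum_win' R N (maxn M N)) ?leq_maxr //; exact: supp_mulr.
Qed.

Lemma elem_supp (R : realType) (p : R) : supported_in 1 (elemfilt p).
Proof.
move=> t ht; rewrite /elemfilt.
have -> : (t == 0) = false by apply/negbTE; apply/eqP => E; rewrite E in ht.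
have -> : (absz t == 1%N) = false by apply/negbTE; apply/eqP => E; rewrite E in ht.
by [].
Qed.

Lemma inv_elem_gt2 (R : realType) (p : R) : invertible (elemfilt p) -> 2 < `|p|.
Proof.
move=> [M [hM [z [hz [_ hd]]]]].
rewrite ltNge; apply/negP => hp.
apply: (@K1 R p z hd _ hp) => t.
rewrite -fconv_elem (@fconv_win R 1 M) //; exact: elem_supp.
Qed.

Lemma inv_prod_gt2 (R : realType) (ps : seq R) j : (j < size ps)%N ->
  invertible (filtprod ps) -> 2 < `|nth 0 ps j|.
Proof.
move=> hj [M [hM [z [hz [_ hd]]]]].
rewrite ltNge; apply/negP => hp.
have [y [hy E]] := @Lstack_extract R ps z j hj hd.
apply: (@K1 R _ y hy _ hp) => t.
rewrite -E -fconv_filtprod (@fconv_win R _ M) //; exact: supp_filtprod.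
Qed.

Lemma geo_solve (R : realType) (g : int -> R) (K r lam : R) :
  0 <= K -> 0 < r -> r < 1 -> `|lam| < r -> (forall t, `|g t| <= K * r ^+ absz t) ->
  exists h : int -> R, (forall t, h t = g t + lam * h (t + 1)) /\
    (forall t, `|h t| <= K / (1 - `|lam| / r) * r ^+ absz t).
Proof.
move=> K0 r0 r1 lr Hg.
set q := `|lam| / r.
have q0 : 0 <= q by rewrite divr_ge0 // ltW.
have q1 : q < 1 by rewrite /q ltr_pdivrMr // mul1r.
have q1' : `|q| < 1 by rewrite ger0_norm.
pose f := fun (t : int) (k : nat) => lam ^+ k * g (t + k%:Z).
have Hf : forall t k, `|f t k| <= geometric (K * r ^+ absz t) q k.
  move=> t k; rewrite /f /geometric /= normrM normrX.
  have rk : 0 < r ^+ k by rewrite exprn_gt0.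
  have E : r ^+ absz (t + k%:Z) <= r ^+ absz t / r ^+ k.
    rewrite ler_pdivlMr // -exprD; apply: ler_wiXn2l; [exact: ltW|exact: ltW|lia].
  apply: le_trans (_ : `|lam| ^+ k * (K * (r ^+ absz t / r ^+ k)) <= _).
    apply: ler_wpM2l; first by rewrite exprn_ge0.
    apply: le_trans (Hg _) _; exact: ler_wpM2l.
  rewrite /q expr_div_n le_eqVlt; apply/orP; left; apply/eqP; field.
  by rewrite gt_eqF.
have cvgN : forall t, cvgn [normed series (f t)].
  move=> t; apply: (@series_le_cvg R (fun k => `|f t k|) (geometric (K * r ^+ absz t) q)).
  - by move=> n; rewrite normr_ge0.
  - by move=> n; rewrite geometric_ge0 // mulr_ge0 // exprn_ge0 // ltW.
  - exact: Hf.
  - exact: is_cvg_geometric_series.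
have cvgS : forall t, cvgn (series (f t)) by move=> t; exact: normed_cvg.
exists (fun t => limn (series (f t))); split.
- move=> t.
  have E : forall n, series (f t) n.+1 = g t + lam * series (f (t + 1)) n.
    move=> n; rewrite !seriesEord /= big_ord_recl /f /= expr0 mul1r addr0 mulr_sumr.
    congr (_ + _); apply: eq_bigr => i _; rewrite exprS -mulrA /bump /=.
    by congr (_ * (_ * g _)); lia.
  have C1 : (fun n => series (f t) n.+1) @ \oo --> limn (series (f t)).
    by have := cvgS t; rewrite -cvg_shiftS.
  have C2 : (fun n => g t + lam * series (f (t + 1)) n) @ \oo -->
             g t + lam * limn (series (f (t + 1))).
    apply: cvgD; first exact: cvg_cst.
    exact: cvgMl_tmp (cvgS (t + 1)).
  rewrite -(cvg_lim _ C1) // -(cvg_lim _ C2) //.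
  have EE : (fun n => series (f t) n.+1) = (fun n => g t + lam * series (f (t + 1)) n).
    exact: boolp.funext E.
  by rewrite EE.
- move=> t; apply: le_trans (lim_series_norm (cvgN t)) _.
  have L : limn [normed series (f t)] <= limn (series (geometric (K * r ^+ absz t) q)).
    apply: lim_series_le; [exact: cvgN|exact: is_cvg_geometric_series|exact: Hf].
  apply: le_trans L _.
  rewrite (cvg_lim _ (@cvg_geometric_series R _ _ q1')) //.
  by rewrite mulrAC.
Qed.

Lemma powle (R : realType) (x y : R) n : 0 <= x -> x <= y -> x ^+ n <= y ^+ n.
Proof.
move=> x0 xy; elim: n => [|n IH]; first by rewrite !expr0.
rewrite !exprS; apply: ler_pM => //; exact: exprn_ge0.
Qed.

Lemma geo_solve_rev (R : realType) (g : int -> R) (K r lam : R) :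
  0 <= K -> 0 < r -> r < 1 -> `|lam| < r -> (forall t, `|g t| <= K * r ^+ absz t) ->
  exists h : int -> R, (forall t, h t = g t + lam * h (t - 1)) /\
    (forall t, `|h t| <= K / (1 - `|lam| / r) * r ^+ absz t).
Proof.
move=> K0 r0 r1 lr Hg.
have Hg' : forall t : int, `|g (- t)| <= K * r ^+ absz t.
  by move=> t; have := Hg (- t); rewrite abszN.
have [h [h1 h2]] := @geo_solve R (fun t => g (- t)) K r lam K0 r0 r1 lr Hg'.
exists (fun t => h (- t)); split.
- by move=> t; rewrite h1 opprK; congr (_ + _ * h _); lia.
- by move=> t; have := h2 (- t); rewrite abszN.
Qed.

Lemma root_exists (R : realType) (p : R) : 2 < `|p| ->
  exists lam : R, lam ^+ 2 + p * lam + 1 = 0 /\ `|lam| < 1 /\ lam != 0.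
Proof.
move=> hp.
set s := Num.sqrt (p ^+ 2 - 4).
have hp2 : 4 < p ^+ 2.
  have : 2 ^+ 2 < `|p| ^+ 2 by rewrite ltr_pXn2r ?nnegrE //; lra.
  by rewrite real_normK ?num_real //; lra.
have s0 : 0 <= s by exact: sqrtr_ge0.
have s2 : s ^+ 2 = p ^+ 2 - 4 by rewrite sqr_sqrtr //; lra.
have [pp|pn] : 2 < p \/ p < -2.
  by move: hp; rewrite ltr_normr => /orP [|]; [left|right]; lra.
- exists ((s - p) / 2); split; first by rewrite -[_ ^+ 2]/(_ * _); nra.
  have hsp : s < p by nra.
  have hsp2 : p - 2 < s by nra.
  split; last by apply/eqP => E; nra.
  rewrite ltr_norml; apply/andP; split; lra.
- exists ((- p - s) / 2); split; first by nra.
  have hsp : s < - p by nra.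
  have hsp2 : - p - 2 < s by nra.
  split; last by apply/eqP => E; nra.
  rewrite ltr_norml; apply/andP; split; lra.
Qed.

Lemma elem_solve (R : realType) (p : R) (g : int -> R) : 2 < `|p| -> exp_decay g ->
  exists w, exp_decay w /\ Lop p w = g.
Proof.
move=> hp [K [r [K0 [r0 [r1 Hg]]]]].
have [lam [heq [hl hl0]]] := @root_exists R p hp.
set r' := (Num.max r `|lam| + 1) / 2.
have hm1 : r <= Num.max r `|lam| by rewrite le_max lexx.
have hm2 : `|lam| <= Num.max r `|lam| by rewrite le_max lexx orbT.
have hm3 : Num.max r `|lam| < 1 by rewrite gt_max r1 hl.
have r'0 : 0 < r' by rewrite /r'; lra.
have r'1 : r' < 1 by rewrite /r'; lra.
have hlr : `|lam| < r' by rewrite /r'; lra.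
have Hg' : forall t, `|- lam * g t| <= (`|lam| * K) * r' ^+ absz t.
  move=> t; rewrite normrM normrN -mulrA; apply: ler_wpM2l => //.
  apply: le_trans (Hg t) _; apply: ler_wpM2l; first exact: ltW.
  apply: powle; first exact: ltW.
  rewrite /r'; lra.
have K1 : 0 <= `|lam| * K by rewrite mulr_ge0 // ltW.
have [v [v1 v2]] := @geo_solve R (fun t => - lam * g t) _ _ lam K1 r'0 r'1 hlr Hg'.
set K2 := `|lam| * K / (1 - `|lam| / r').
have q1 : `|lam| / r' < 1 by rewrite ltr_pdivrMr // mul1r.
have K2p : 0 <= K2 by rewrite /K2 divr_ge0 //; lra.
have [w [w1 w2]] := @geo_solve_rev R v _ _ lam K2p r'0 r'1 hlr v2.
exists w; split.
  exists (K2 / (1 - `|lam| / r') + 1), r'; split.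
    have : 0 <= K2 / (1 - `|lam| / r') by rewrite divr_ge0 //; lra.
    lra.
  do 2 split => //.
  move=> t; apply: le_trans (w2 t) _; apply: ler_wpM2r; first by rewrite exprn_ge0 // ltW.
  lra.
apply: boolp.funext => t; apply: (mulfI hl0).
have h1 : w (t + 1) - lam * w t = v (t + 1) by rewrite w1 addrK; ring.
have h2 : w t - lam * w (t - 1) = v t by rewrite w1; ring.
have h3 : lam * v (t + 1) - v t = lam * g t by rewrite [v t]v1; ring.
rewrite /Lop.
have -> : lam * (w (t + 1) + p * w t + w (t - 1)) =
  lam * (w (t + 1) - lam * w t) - (w t - lam * w (t - 1)) + (lam ^+ 2 + p * lam + 1) * w t
  by ring.
by rewrite h1 h2 heq mul0r addr0 h3.
Qed.

Lemma prod_solve (R : realType) (ps : seq R) :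
  (forall j, (j < size ps)%N -> 2 < `|nth 0 ps j|) ->
  forall g, exp_decay g -> exists w, exp_decay w /\ Lstack ps w = g.
Proof.
elim: ps => [|q ps IH] H g hg; first by exists g.
have [w1 [hw1 E1]] := @elem_solve R q g (H 0%N erefl) hg.
have [w [hw E]] := IH (fun j hj => H j.+1 hj) w1 hw1.
by exists w; split => //=; rewrite E.
Qed.

Lemma csum_geo (R : realType) (r : R) n : 0 < r -> r < 1 ->
  csum n (fun k => r ^+ absz k) <= (1 + r) / (1 - r) - 2 * r ^+ n.+1 / (1 - r).
Proof.
move=> r0 r1; elim: n => [|n IH].
  rewrite /csum big_ord_recr big_ord0 /= add0r expr0 expr1.
  rewrite le_eqVlt; apply/orP; left; apply/eqP; field; lra.
rewrite csumS.
have -> : absz (- n.+1%:Z) = n.+1 by lia.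
have -> : absz (n.+1%:Z) = n.+1 by [].
have E : (1 + r) / (1 - r) - 2 * r ^+ n.+2 / (1 - r) =
  (1 + r) / (1 - r) - 2 * r ^+ n.+1 / (1 - r) + 2 * r ^+ n.+1.
  rewrite exprS; field; lra.
rewrite E; lra.
Qed.

Lemma decay_summable (R : realType) (z : int -> R) : exp_decay z -> Defs.summable z.
Proof.
move=> [K [r [K0 [r0 [r1 Hz]]]]].
exists (K * ((1 + r) / (1 - r))) => n.
apply: le_trans (_ : K * csum n (fun k => r ^+ absz k) <= _).
  rewrite /csum mulr_sumr; apply: ler_sum => i _; exact: Hz.
apply: ler_wpM2l; first exact: ltW.
apply: le_trans (@csum_geo R r n r0 r1) _.
have : 0 <= 2 * r ^+ n.+1 / (1 - r).
  apply: divr_ge0; last lra.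
  by rewrite mulr_ge0 // exprn_ge0 // ltW.
lra.
Qed.

Lemma unit_decay (R : realType) : exp_decay (unitseq R).
Proof.
exists 1, (1 / 2); do 3 (split; first lra).
move=> t; rewrite /unitseq; case: eqP => [->|_].
  by rewrite normr1 expr0 mulr1.
by rewrite normr0 mul1r exprn_ge0 //; lra.
Qed.

Theorem mainTheorem2 (R : realType) (ps : seq R) :
  invertible (filtprod ps) <->
  (forall j : nat, (j < size ps)%N -> invertible (elemfilt (nth 0 ps j))).
Proof.
split.
- move=> hinv j hj.
  have hp := @inv_prod_gt2 R ps j hj hinv.
  have [w [hw E]] := @elem_solve R (nth 0 ps j) (unitseq R) hp (@unit_decay R).
  exists 1%N; split; first exact: elem_supp.
  exists w; split; last by split; [exact: decay_summable|].
  by move=> t; rewrite fconv_elem E.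
- move=> H.
  have H' : forall j, (j < size ps)%N -> 2 < `|nth 0 ps j|.
    by move=> j hj; apply: inv_elem_gt2; exact: H.
  have [w [hw E]] := @prod_solve R ps H' (unitseq R) (@unit_decay R).
  exists (size ps); split; first exact: supp_filtprod.
  exists w; split; last by split; [exact: decay_summable|].
  by move=> t; rewrite fconv_filtprod E.
Qed.
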